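(* In the setting below, for every integer $t$ with $1 \leq t < \tau$ and every $i \in D_t^-$, if $\eta \geq \eta_0$ then $$a_{t+1}^i - a_t^i \geq \max\left(\frac{\eta\|x_i\|^2}{2n(\exp(a_t^i)+1)}, \ \frac{1}{2}\eta\gamma^2 G(w_t)\right).$$
   Context: Dimension $d=2$. Data $x_1,\dots,x_n\in\mathbb{R}^2$ with $\|x_i\|\le 1$, linearly separable (some $w$ has $\langle w,x_i\rangle>0$ for all $i$). $F(w) = \frac{1}{n}\sum_{i=1}^n \log(1+\exp(-\langle w, x_i\rangle))$ and $G(w) = \frac{1}{n}\sum_{i=1}^n \frac{1}{\exp(\langle w, x_i\rangle)+1}$. Maximum margin $\gamma = \max_{\|w\|=1}\min_i \langle w, x_i\rangle$ with maximizer the unit vector $w_*$; $v_*$ is a fixed unit vector orthogonal to $w_*$. Gradient descent: $w_0=0$, $w_{t+1} = w_t - \eta\nabla F(w_t)$ with constant $\eta>0$. $\tilde{w}_t = \langle w_t, v_*\rangle$, $\tilde{x}_i = \langle x_i, v_*\rangle$, $a_t^i = \langle w_t, x_i\rangle$, $D_t^- = \{i\in[n] : \tilde{x}_i\tilde{w}_t < 0\}$. $\tau = \min\{t\ge 0: F(w_t)\le 1/(8\eta)\}$. $\eta_0 = \max(n, \frac{32}{\gamma^2}\log\frac{256}{\gamma^2})$. *)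

(* Defs.v *)
From Stdlib Require Import Reals Lra.
Open Scope R_scope.

Definition vec := (R * R)%type.
Definition dot (u v : vec) : R := fst u * fst v + snd u * snd v.
Definition vnorm (u : vec) : R := sqrt (dot u u).
Definition vadd (u v : vec) : vec := (fst u + fst v, snd u + snd v).
Definition vscale (c : R) (u : vec) : vec := (c * fst u, c * snd u).

Fixpoint rsum (n : nat) (f : nat -> R) : R :=
  match n with O => 0 | S m => rsum m f + f m end.
Fixpoint vsum (n : nat) (f : nat -> vec) : vec :=
  match n with O => (0, 0) | S m => vadd (vsum m f) (f m) end.

Definition Floss (n : nat) (x : nat -> vec) (w : vec) : R :=
  / INR n * rsum n (fun i => ln (1 + exp (- dot w (x i)))).
Definition Gfun (n : nat) (x : nat -> vec) (w : vec) : R :=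
  / INR n * rsum n (fun i => / (exp (dot w (x i)) + 1)).

(* gradient of Floss, written out:
   grad F(w) = (1/n) sum_i -x_i / (1 + exp <w,x_i>) *)
Definition gradF (n : nat) (x : nat -> vec) (w : vec) : vec :=
  vscale (/ INR n) (vsum n (fun i => vscale (- / (1 + exp (dot w (x i)))) (x i))).

Fixpoint gd (n : nat) (x : nat -> vec) (eta : R) (t : nat) : vec :=
  match t with
  | O => (0, 0)
  | S s => let w := gd n x eta s in vadd w (vscale (- eta) (gradF n x w))
  end.

Definition eta0 (n : nat) (gamma : R) : R :=
  Rmax (INR n) (32 / gamma ^ 2 * ln (256 / gamma ^ 2)).

(* Main.v *)
Require Import Defs.
From Stdlib Require Import Reals Lra Lia Classical.
Open Scope R_scope.

Lemma exp_le' a b : a <= b -> exp a <= exp b.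
Proof. intros H; destruct (Rle_lt_or_eq_dec _ _ H) as [h|h];
  [left; apply exp_increasing; auto | subst; lra]. Qed.

Lemma ln_le' a b : 0 < a -> a <= b -> ln a <= ln b.
Proof. intros Ha H; destruct (Rle_lt_or_eq_dec _ _ H) as [h|h];
  [left; apply ln_increasing; auto | subst; lra]. Qed.

Lemma dot_comm u v : dot u v = dot v u.
Proof. unfold dot; ring. Qed.
Lemma dot_vadd_l u v y : dot (vadd u v) y = dot u y + dot v y.
Proof. destruct u, v, y; unfold dot, vadd; simpl; ring. Qed.
Lemma dot_vscale_l c u y : dot (vscale c u) y = c * dot u y.
Proof. destruct u, y; unfold dot, vscale; simpl; ring. Qed.
Lemma dot_vsum n f y : dot (vsum n f) y = rsum n (fun j => dot (f j) y).
Proof. induction n; simpl.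
  - destruct y; unfold dot; simpl; ring.
  - rewrite dot_vadd_l, IHn; reflexivity. Qed.

Lemma rsum_ext n f g : (forall j, (j < n)%nat -> f j = g j) -> rsum n f = rsum n g.
Proof. induction n; simpl; intros H; auto.
  rewrite IHn by (intros; apply H; lia). rewrite H by lia. reflexivity. Qed.
Lemma rsum_le n f g : (forall j, (j < n)%nat -> f j <= g j) -> rsum n f <= rsum n g.
Proof. induction n; simpl; intros H; [lra|].
  pose proof (IHn ltac:(intros; apply H; lia)). pose proof (H n ltac:(lia)). lra. Qed.
Lemma rsum_plus n f g : rsum n (fun j => f j + g j) = rsum n f + rsum n g.
Proof. induction n; simpl; [ring| rewrite IHn; ring]. Qed.
Lemma rsum_scal n c f : rsum n (fun j => c * f j) = c * rsum n f.
Proof. induction n; simpl; [ring| rewrite IHn; ring]. Qed.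
Lemma rsum_const n c : rsum n (fun _ => c) = INR n * c.
Proof. induction n; simpl rsum; [simpl; ring| rewrite IHn, S_INR; ring]. Qed.
Lemma rsum_ind n i c : (i < n)%nat -> rsum n (fun j => if Nat.eqb j i then c else 0) = c.
Proof. induction n; intros H; [lia|]. simpl rsum.
  destruct (Nat.eqb_spec n i).
  - subst. rewrite (rsum_ext _ _ (fun _ => 0)).
    + rewrite rsum_const; ring.
    + intros j Hj. destruct (Nat.eqb_spec j i); [lia|auto].
  - rewrite IHn by lia. ring. Qed.
Lemma rsum_ge_term n f k : (forall j, (j < n)%nat -> 0 <= f j) -> (k < n)%nat -> f k <= rsum n f.
Proof. induction n; intros H Hk; [lia|]. simpl.
  assert (0 <= rsum n f).
  { rewrite <- (Rmult_0_r (INR n)), <- rsum_const. apply rsum_le. intros; apply H; lia. }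
  destruct (Nat.eq_dec k n).
  - subst; lra.
  - pose proof (IHn ltac:(intros; apply H; lia) ltac:(lia)). pose proof (H n ltac:(lia)). lra. Qed.

Lemma decomp w v y z : dot w w = 1 -> dot v v = 1 -> dot w v = 0 ->
  dot y z = dot y w * dot z w + dot y v * dot z v.
Proof.
  destruct w as [w1 w2], v as [v1 v2], y as [y1 y2], z as [z1 z2]; unfold dot; simpl.
  intros Hw Hv Hwv.
  set (k := w1 * v2 - w2 * v1).
  assert (E1 : v1 = - w2 * k).
  { assert (v1 * (w1*w1+w2*w2) + w2 * k = w1 * (w1*v1+w2*v2)) by (unfold k; ring).
    rewrite Hw, Hwv in H. lra. }
  assert (E2 : v2 = w1 * k).
  { assert (v2 * (w1*w1+w2*w2) - w1 * k = w2 * (w1*v1+w2*v2)) by (unfold k; ring).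
    rewrite Hw, Hwv in H. lra. }
  assert (Hk : k * k = 1).
  { rewrite E1, E2 in Hv. 
    assert ((- w2 * k) * (- w2 * k) + (w1 * k) * (w1 * k) = (k*k) * (w1*w1+w2*w2)) by ring.
    rewrite Hw in H. lra. }
  clearbody k. rewrite E1, E2.
  transitivity ((y1*z1+y2*z2)*(w1*w1+w2*w2) + (k*k-1)*((y2*w1-y1*w2)*(z2*w1-z1*w2))).
  - rewrite Hw, Hk; ring.
  - ring.
Qed.

Lemma dot_step n x eta t y :
  dot (gd n x eta (S t)) y = dot (gd n x eta t) y +
    eta * / INR n * rsum n (fun j => / (exp (dot (gd n x eta t) (x j)) + 1) * dot (x j) y).
Proof.
  simpl gd. rewrite dot_vadd_l, dot_vscale_l. unfold gradF.
  rewrite dot_vscale_l, dot_vsum.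
  rewrite (rsum_ext _ _ (fun j => -1 * (/ (exp (dot (gd n x eta t) (x j)) + 1) * dot (x j) y))).
  - rewrite rsum_scal. ring.
  - intros j _. rewrite dot_vscale_l. rewrite (Rplus_comm 1). ring.
Qed.
Lemma U_mono n x eta gamma wstar t : (0 < n)%nat -> 0 < gamma -> 0 < eta ->
  (forall j, (j < n)%nat -> gamma <= dot (x j) wstar) ->
  dot (gd n x eta t) wstar <= dot (gd n x eta (S t)) wstar.
Proof.
  intros Hn Hg He Ha. rewrite dot_step.
  assert (0 <= rsum n (fun j => / (exp (dot (gd n x eta t) (x j)) + 1) * dot (x j) wstar)).
  { rewrite <- (Rmult_0_r (INR n)), <- rsum_const. apply rsum_le. intros j Hj.
    pose proof (Ha j Hj). pose proof (exp_pos (dot (gd n x eta t) (x j))).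
    assert (0 < / (exp (dot (gd n x eta t) (x j)) + 1)) by (apply Rinv_0_lt_compat; lra).
    nra. }
  assert (0 < INR n) by (apply lt_0_INR; lia).
  assert (0 < / INR n) by (apply Rinv_0_lt_compat; lra).
  assert (0 <= eta * / INR n) by nra. nra.
Qed.

Lemma U_ge n x eta gamma wstar : (0 < n)%nat -> 0 < gamma -> 0 < eta ->
  (forall j, (j < n)%nat -> gamma <= dot (x j) wstar) ->
  forall t, eta * gamma / 2 <= dot (gd n x eta (S t)) wstar.
Proof.
  intros Hn Hg He Ha t. induction t.
  - rewrite dot_step.
    assert (rsum n (fun j => gamma / 2) <=
       rsum n (fun j => / (exp (dot (gd n x eta 0) (x j)) + 1) * dot (x j) wstar)).
    { apply rsum_le. intros j Hj. simpl gd. 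
      replace (dot (0,0) (x j)) with 0 by (unfold dot; simpl; ring).
      rewrite exp_0. pose proof (Ha j Hj). lra. }
    rewrite rsum_const in H.
    assert (0 < INR n) by (apply lt_0_INR; lia).
    replace (dot (gd n x eta 0) wstar) with 0 by (simpl; unfold dot; simpl; ring).
    assert (eta * / INR n * (INR n * (gamma / 2)) = eta * gamma / 2) by (field; lra).
    assert (0 < / INR n) by (apply Rinv_0_lt_compat; lra).
    assert (0 <= eta * / INR n) by nra. nra.
  - pose proof (U_mono n x eta gamma wstar (S t) Hn Hg He Ha). lra.
Qed.
Theorem lemma5 (n : nat) (x : nat -> vec) (eta gamma : R) (wstar vstar : vec) :
  (0 < n)%nat ->
  (forall i, (i < n)%nat -> vnorm (x i) <= 1) ->
  (exists w : vec, forall i, (i < n)%nat -> 0 < dot w (x i)) ->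
  vnorm wstar = 1 ->
  (forall i, (i < n)%nat -> gamma <= dot wstar (x i)) ->
  (forall w : vec, vnorm w = 1 -> exists i, (i < n)%nat /\ dot w (x i) <= gamma) ->
  vnorm vstar = 1 -> dot wstar vstar = 0 ->
  0 < eta ->
  forall (t i : nat),
  (1 <= t)%nat ->
  (forall s, (s <= t)%nat -> 1 / (8 * eta) < Floss n x (gd n x eta s)) ->
  (i < n)%nat ->
  dot (x i) vstar * dot (gd n x eta t) vstar < 0 ->
  eta >= eta0 n gamma ->
  dot (gd n x eta (S t)) (x i) - dot (gd n x eta t) (x i) >=
  Rmax (eta * vnorm (x i) ^ 2 / (2 * INR n * (exp (dot (gd n x eta t) (x i)) + 1)))
       (1 / 2 * eta * gamma ^ 2 * Gfun n x (gd n x eta t)).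
Proof.
  intros Hn Hx Hsep Hws Hgam Hmax Hvs Horth Heta t i Ht HF Hi HD Heta0.
  assert (HnR : 0 < INR n) by (apply lt_0_INR; lia).
  assert (Hnorm1 : forall v, vnorm v = 1 -> dot v v = 1).
  { intros v Hv. unfold vnorm in Hv.
    assert (0 <= dot v v) by (destruct v; unfold dot; simpl; nra).
    rewrite <- (sqrt_sqrt (dot v v)) by auto. rewrite Hv; ring. }
  assert (Hww := Hnorm1 _ Hws). assert (Hvv := Hnorm1 _ Hvs).
  assert (Hdec : forall y z, dot y z = dot y wstar * dot z wstar + dot y vstar * dot z vstar)
    by (intros; apply decomp; auto).
  assert (Hxx : forall j, (j < n)%nat -> dot (x j) (x j) <= 1).
  { intros j Hj. pose proof (Hx j Hj). unfold vnorm in H.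
    assert (0 <= dot (x j) (x j)) by (destruct (x j); unfold dot; simpl; nra).
    rewrite <- (sqrt_sqrt (dot (x j) (x j))) by auto.
    pose proof (sqrt_pos (dot (x j) (x j))). nra. }
  assert (Hal : forall j, (j < n)%nat -> gamma <= dot (x j) wstar).
  { intros; rewrite dot_comm; auto. }
  assert (Hg : 0 < gamma).
  { destruct Hsep as [w0 Hw0].
    pose proof (Hw0 0%nat Hn) as H0.
    destruct w0 as [a b].
    assert (Hab : 0 < a*a+b*b).
    { destruct (Req_dec a 0); destruct (Req_dec b 0); try nra.
      subst. unfold dot in H0; simpl in H0. lra. }
    set (r := sqrt (a*a+b*b)).
    assert (Hr : 0 < r) by (apply sqrt_lt_R0; auto).
    assert (Hrr : r * r = a*a+b*b) by (apply sqrt_sqrt; lra).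
    destruct (Hmax (vscale (/r) (a,b))) as [k [Hk Hk2]].
    - unfold vnorm. rewrite <- sqrt_1. f_equal. unfold dot, vscale; simpl.
      field_simplify; [|lra]. replace (r ^ 2) with (a*a+b*b) by (rewrite <- Hrr; ring). field. lra.
    - rewrite dot_vscale_l in Hk2. pose proof (Hw0 k Hk).
      assert (0 < / r) by (apply Rinv_0_lt_compat; lra). nra. }
  destruct t as [|t]; [lia|].
  set (W := gd n x eta (S t)) in *.
  assert (Hu : eta * gamma / 2 <= dot W wstar) by (apply (U_ge n x eta gamma wstar); auto).
  set (u := dot W wstar) in *. set (s := dot W vstar) in *.
  set (c := eta * gamma ^ 2).
  assert (Hc : 0 < c) by (unfold c; apply Rmult_lt_0_compat; [lra| apply pow_lt; lra]).
  set (eps := exp (- (c / 2))).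
  assert (Heps0 : 0 < eps) by apply exp_pos.
  set (g := fun j => / (exp (dot W (x j)) + 1)).
  assert (Hgpos : forall j, 0 < g j).
  { intros j; unfold g; apply Rinv_0_lt_compat; pose proof (exp_pos (dot W (x j))); lra. }
  assert (HgD : forall j, (j < n)%nat -> 0 < dot (x j) vstar * s -> g j <= eps).
  { intros j Hj Hp. 
    assert (Ha : c / 2 <= dot W (x j)).
    { rewrite (Hdec W (x j)). fold u s. pose proof (Hal j Hj) as HA.
      assert (0 <= u) by nra.
      assert (u * gamma <= u * dot (x j) wstar) by nra.
      assert (eta * gamma / 2 * gamma <= u * gamma) by nra.
      unfold c. nra. }
    unfold g, eps. pose proof (exp_pos (dot W (x j))).
    apply Rle_trans with (/ exp (dot W (x j))).
    - apply Rinv_le_contravar; lra.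
    - rewrite <- exp_Ropp. apply exp_le'. lra. }
  assert (Hbb : forall j, (j < n)%nat -> dot (x j) vstar ^ 2 <= 1).
  { intros j Hj. pose proof (Hxx j Hj). rewrite Hdec in H. nra. }
  assert (Hcross : forall j, (j < n)%nat -> - eps <= g j * (dot (x j) vstar * dot (x i) vstar)).
  { intros j Hj. pose proof (Hgpos j).
    destruct (Rle_lt_dec 0 (dot (x j) vstar * dot (x i) vstar)).
    - nra.
    - assert (0 < dot (x j) vstar * s).
      { fold s in HD. 
        assert (0 < (dot (x j) vstar * dot (x i) vstar) * (dot (x i) vstar * s)).
        { replace ((dot (x j) vstar * dot (x i) vstar) * (dot (x i) vstar * s)) with
            ((- (dot (x j) vstar * dot (x i) vstar)) * (- (dot (x i) vstar * s))) by ring.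
          apply Rmult_lt_0_compat; lra. }
        destruct (Rle_lt_dec (dot (x j) vstar * s) 0); auto.
        assert ((dot (x j) vstar * dot (x i) vstar) * (dot (x i) vstar * s)
            = (dot (x i) vstar)^2 * (dot (x j) vstar * s)) by ring.
        assert (0 <= (dot (x i) vstar)^2) by nra. nra. }
      pose proof (HgD j Hj H0).
      pose proof (Hbb j Hj). pose proof (Hbb i Hi).
      assert (-1 <= dot (x j) vstar * dot (x i) vstar) by nra.
      nra. }
  set (T := fun j => g j * dot (x j) (x i)).
  assert (HTB : forall j, (j < n)%nat -> gamma ^ 2 * g j + - eps <= T j).
  { intros j Hj. unfold T. rewrite Hdec. pose proof (Hcross j Hj).
    pose proof (Hal j Hj). pose proof (Hal i Hi). pose proof (Hgpos j).
    assert (gamma * gamma <= dot (x j) wstar * dot (x i) wstar) by nra.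
    nra. }
  assert (HTA : forall j, (j < n)%nat -> gamma ^ 2 / 2 * g j + - eps +
            (if Nat.eqb j i then g i * dot (x i) (x i) / 2 else 0) <= T j).
  { intros j Hj. destruct (Nat.eqb_spec j i).
    - subst j. unfold T. pose proof (Hgpos i).
      assert (gamma ^ 2 <= dot (x i) (x i)).
      { rewrite (Hdec (x i) (x i)). pose proof (Hal i Hi). nra. }
      nra.
    - pose proof (HTB j Hj). pose proof (Hgpos j). nra. }
  set (SG := rsum n g).
  assert (HSB : gamma ^ 2 * SG + - (INR n * eps) <= rsum n T).
  { eapply Rle_trans; [| apply rsum_le; exact HTB].
    rewrite rsum_plus, rsum_scal, rsum_const. unfold SG. lra. }
  assert (HSA : gamma ^ 2 / 2 * SG + - (INR n * eps) + g i * dot (x i) (x i) / 2 <= rsum n T).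
  { eapply Rle_trans; [| apply rsum_le; exact HTA].
    rewrite !rsum_plus, rsum_scal, rsum_const, rsum_ind by auto. unfold SG. lra. }
  assert (HG : INR n / (16 * eta) < SG).
  { pose proof (HF (S t) (Nat.le_refl _)) as HFt. fold W in HFt. unfold Floss in HFt.
    destruct (classic (exists k, (k < n)%nat /\ dot W (x k) < 0)) as [[k [Hk Hk2]]|Hno].
    - assert (Hgk : / 2 < g k).
      { unfold g. apply Rinv_lt_contravar.
        + pose proof (exp_pos (dot W (x k))). lra.
        + assert (exp (dot W (x k)) < exp 0) by (apply exp_increasing; auto).
          rewrite exp_0 in H. lra. }
      assert (g k <= SG) by (apply rsum_ge_term; auto; intros; apply Rlt_le; auto).
      assert (INR n <= eta).
      { unfold eta0 in Heta0. pose proof (Rmax_l (INR n) (32 / gamma ^ 2 * ln (256 / gamma ^ 2))). lra. }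
      apply Rlt_le_trans with (/2); [|lra].
      apply Rmult_lt_reg_r with (16 * eta); [lra|].
      field_simplify; lra.
    - assert (Hl : rsum n (fun i0 => ln (1 + exp (- dot W (x i0)))) <= rsum n (fun j => 2 * g j)).
      { apply rsum_le. intros j Hj.
        assert (0 <= dot W (x j)).
        { destruct (Rle_lt_dec 0 (dot W (x j))); auto. exfalso; apply Hno; eauto. }
        pose proof (exp_pos (- dot W (x j))).
        apply Rle_trans with (exp (- dot W (x j))).
        - rewrite <- (ln_exp (exp (- dot W (x j)))) at 2. apply ln_le'; [lra|].
          apply exp_ineq1_le.
        - unfold g. rewrite exp_Ropp. pose proof (exp_pos (dot W (x j))).
          assert (1 <= exp (dot W (x j))).
          { rewrite <- exp_0. apply exp_le'. auto. }
          apply Rmult_le_reg_r with (exp (dot W (x j)) * (exp (dot W (x j)) + 1)).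
          + nra.
          + field_simplify; lra. }
      rewrite rsum_scal in Hl. fold SG in Hl.
      assert (0 < / INR n) by (apply Rinv_0_lt_compat; lra).
      assert (1 / (8 * eta) < / INR n * (2 * SG)) by nra.
      apply Rmult_lt_reg_r with (/ INR n); auto.
      replace (INR n / (16 * eta) * / INR n) with (1 / (8 * eta) / 2) by (field; lra).
      assert (/ INR n * (2*SG) = 2 * (SG * / INR n)) by ring.
      lra. }
  assert (Heps : eps <= gamma ^ 2 / (32 * eta)).
  { set (p := exp (c / 32)).
    assert (Hp0 : 0 < p) by apply exp_pos.
    assert (Hp1 : 1 + c / 32 <= p) by apply exp_ineq1_le.
    assert (Hgp : 256 <= gamma ^ 2 * p).
    { unfold eta0 in Heta0. pose proof (Rmax_r (INR n) (32 / gamma ^ 2 * ln (256 / gamma ^ 2))).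
      assert (Hl : ln (256 / gamma ^ 2) <= c / 32).
      { assert (32 / gamma ^ 2 * ln (256 / gamma ^ 2) <= eta) by lra.
        assert (0 < gamma ^ 2) by nra.
        apply Rmult_le_reg_l with (32 / gamma ^ 2). 
        - apply Rdiv_lt_0_compat; lra.
        - unfold c. replace (32 / gamma ^ 2 * (eta * gamma ^ 2 / 32)) with eta by (field; lra). lra. }
      assert (0 < 256 / gamma ^ 2) by (apply Rdiv_lt_0_compat; nra).
      pose proof (exp_le' _ _ Hl) as HE. rewrite exp_ln in HE by auto. fold p in HE.
      apply Rmult_le_compat_l with (r := gamma ^ 2) in HE; [|nra].
      replace (gamma ^ 2 * (256 / gamma ^ 2)) with 256 in HE by (field; nra). lra. }
    assert (Hexp : exp (c / 2) = p ^ 16).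
    { replace (c / 2) with (c/32+c/32+c/32+c/32+c/32+c/32+c/32+c/32+c/32+c/32+c/32+c/32+c/32+c/32+c/32+c/32) by field.
      rewrite !exp_plus. fold p. ring. }
    unfold eps. rewrite exp_Ropp, Hexp.
    assert (Hp14 : c / 32 <= p ^ 14).
    { assert (1 <= p) by lra. 
      assert (p <= p ^ 14).
      { replace (p ^ 14) with (p * p ^ 13) by ring.
        assert (1 <= p ^ 13) by (apply pow_R1_Rle; lra). nra. }
      lra. }
    assert (H16 : 8 * c * p <= gamma ^ 2 * p ^ 16).
    { replace (gamma ^ 2 * p ^ 16) with ((gamma ^ 2 * p) * p * p ^ 14) by ring.
      assert (0 <= p ^ 14) by (apply pow_le; lra).
      assert (256 * p * p ^ 14 <= (gamma ^ 2 * p) * p * p ^ 14) by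
        (apply Rmult_le_compat_r; auto; nra).
      assert (256 * p * (c / 32) <= 256 * p * p ^ 14) by (apply Rmult_le_compat_l; nra).
      nra. }
    assert (32 * eta <= gamma ^ 2 * p ^ 16).
    { unfold c in H16. assert (4 <= gamma ^ 2 * p) by lra. nra. }
    assert (0 < p ^ 16) by (apply pow_lt; lra).
    apply Rmult_le_reg_r with (32 * eta * p ^ 16); [nra|].
    field_simplify; [|lra|lra]. nra. }
  assert (Hneps : INR n * eps <= gamma ^ 2 * SG / 2).
  { assert (INR n * eps <= INR n * (gamma ^ 2 / (32 * eta))) by (apply Rmult_le_compat_l; lra).
    assert (INR n * (gamma ^ 2 / (32 * eta)) = gamma ^ 2 / 2 * (INR n / (16 * eta))) by (field; lra).
    assert (0 < gamma ^ 2) by nra. nra. }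
  rewrite dot_step. fold W.
  replace (rsum n (fun j => / (exp (dot W (x j)) + 1) * dot (x j) (x i))) with (rsum n T) by reflexivity.
  apply Rle_ge. apply Rmax_lub.
  - unfold vnorm. rewrite pow2_sqrt by (destruct (x i); unfold dot; simpl; nra).
    replace (eta * dot (x i) (x i) / (2 * INR n * (exp (dot W (x i)) + 1)))
      with (eta * / INR n * (g i * dot (x i) (x i) / 2)) by (unfold g; field; split; [pose proof (exp_pos (dot W (x i))); lra | lra]).
    assert (0 < eta * / INR n) by (apply Rmult_lt_0_compat; auto; apply Rinv_0_lt_compat; auto).
    nra.
  - unfold Gfun. fold W.
    replace (rsum n (fun i0 => / (exp (dot W (x i0)) + 1))) with SG by reflexivity.
    replace (1 / 2 * eta * gamma ^ 2 * (/ INR n * SG)) with (eta * / INR n * (gamma ^ 2 * SG / 2)) by (field; lra).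
    assert (0 < eta * / INR n) by (apply Rmult_lt_0_compat; auto; apply Rinv_0_lt_compat; auto).
    nra.
Qed.
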